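(* If $G$ is a connected subcubic graph of order $n\geq 6$, then $$C(G)\leq\begin{cases}\frac{7}{12}+\frac{12}{12n}, & \text{if } n\equiv 0 \pmod 4,\\[2pt] \frac{7}{12}+\frac{13}{12n}, & \text{if } n\equiv 1 \pmod 4,\\[2pt] \frac{7}{12}+\frac{14}{12n}, & \text{if } n\equiv 2 \pmod 4,\\[2pt] \frac{7}{12}+\frac{11}{12n}, & \text{if } n\equiv 3 \pmod 4.\end{cases}$$
   Context: All graphs are finite and simple. A graph is subcubic if its maximum degree is at most $3$. For a vertex $u$ of a graph $G$, $N_G(u)$ is its neighborhood, $d_G(u)$ its degree, and $m(G[N_G(u)])$ the number of edges of the subgraph induced by $N_G(u)$. The clustering coefficient of $u$ in $G$ is $C_u(G)=m(G[N_G(u)])/\binom{d_G(u)}{2}$ if $d_G(u)\geq 2$, and $C_u(G)=0$ otherwise. The clustering coefficient of $G$ is $C(G)=\frac{1}{n(G)}\sum_{u\in V(G)}C_u(G)$, where $n(G)$ is the order of $G$. *)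

(* Defs.v *)
From mathcomp Require Import all_boot all_order all_algebra.
Set Implicit Arguments. Unset Strict Implicit. Unset Printing Implicit Defensive.
Import Order.TTheory GRing.Theory Num.Theory.

Definition simple_graph (T : finType) (e : rel T) : Prop :=
  symmetric e /\ irreflexive e.

Definition nbhd (T : finType) (e : rel T) (u : T) : {set T} := [set v | e u v].
Definition deg (T : finType) (e : rel T) (u : T) : nat := #|nbhd e u|.

Definition subcubic (T : finType) (e : rel T) : Prop :=
  forall u, (deg e u <= 3)%N.

Definition connected_graph (T : finType) (e : rel T) : Prop :=
  forall x y : T, connect e x y.

Definition induced_edges (T : finType) (e : rel T) (A : {set T}) : {set {set T}} :=
  [set S : {set T} | (S \subset A) &&
     [exists v : T, exists w : T, (v != w) && e v w && (S == [set v; w])]].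

Definition m_nbhd (T : finType) (e : rel T) (u : T) : nat :=
  #|induced_edges e (nbhd e u)|.

Local Open Scope ring_scope.

Definition clust_v (T : finType) (e : rel T) (u : T) : rat :=
  if (2 <= deg e u)%N then (m_nbhd e u)%:R / ('C(deg e u, 2))%:R else 0.

Definition clust (T : finType) (e : rel T) : rat :=
  (#|T|%:R)^-1 * \sum_(u : T) clust_v e u.

Definition bound_num (n : nat) : nat :=
  match (n %% 4)%N with 0 => 12 | 1 => 13 | 2 => 14 | _ => 11 end.

Definition clust_bound (n : nat) : rat :=
  7%:R / 12%:R + (bound_num n)%:R / (12 * n)%N%:R.

(* Main.v *)
Require Import Defs.
From mathcomp Require Import all_boot all_order all_algebra.
From mathcomp Require Import zify ring.
Import Order.TTheory GRing.Theory Num.Theory.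
Set Implicit Arguments. Unset Strict Implicit. Unset Printing Implicit Defensive.



Definition Edges (T : finType) (e : rel T) := induced_edges e [set: T].

Lemma EdgesP (T : finType) (e : rel T) (S : {set T}) :
  reflect (exists v w, [/\ v != w, e v w & S = [set v; w]]) (S \in Edges e).
Proof.
rewrite inE subsetT /=; apply: (iffP existsP).
  by move=> [v /existsP [w /andP [/andP [vw evw] /eqP ->]]]; exists v, w.
move=> [v [w [vw evw ->]]]; exists v; apply/existsP; exists w.
by rewrite vw evw eqxx.
Qed.

Fixpoint ball (T : finType) (e : rel T) (r : T) (k : nat) : {set T} :=
  if k is k'.+1 then ball e r k' :|: [set v | [exists w in ball e r k', e v w]]
  else [set r].

Lemma ball_path (T : finType) (e : rel T) (r : T) (p : seq T) (v : T) :
  path e v p -> last v p = r -> v \in ball e r (size p).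
Proof.
elim: p v => [|w p IH] v /=; first by move=> _ ->; rewrite inE.
move=> /andP [evw pw] lw; rewrite inE; apply/orP; right.
rewrite inE; apply/existsP; exists w; by rewrite IH.
Qed.

Lemma edges_lower (T : finType) (e : rel T) :
  irreflexive e -> connected_graph e -> (#|T| <= #|Edges e| + 1)%N.
Proof.
move=> irr con.
case: (posnP #|T|) => [->//|/card_gt0P [r _]].
have Hex v : exists k, v \in ball e r k.
  have /connectP [p pp lp] := con v r; exists (size p); exact: ball_path.
pose h v := ex_minn (Hex v).
have hP v : v \in ball e r (h v) by rewrite /h; case: ex_minnP.
have hmin v k : v \in ball e r k -> (h v <= k)%N.
  by rewrite /h; case: ex_minnP => j _ jm /jm.
have Hpar v : v != r -> exists w, e v w && (h w < h v).
  move=> vr; have := hP v; have := hmin v.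
  case: (h v) => [|k] /=; first by rewrite inE (negbTE vr).
  move=> kmin; rewrite inE => /orP [vk|].
    by have := kmin k vk; rewrite ltnn.
  rewrite inE => /existsP [w /andP [wk evw]].
  exists w; rewrite evw /=; exact: hmin.
pose p v := odflt v [pick w | e v w && (h w < h v)].
have pP v : v != r -> e v (p v) && (h (p v) < h v).
  move=> vr; rewrite /p; case: pickP => [w //|none].
  by have [w] := Hpar v vr; rewrite none.
have inj : {in [set~ r] &, injective (fun v => [set v; p v])}.
  move=> v v'; rewrite !inE => vr v'r eqs.
  apply/eqP; apply/negP => /negP vv.
  have : v \in [set v'; p v'] by rewrite -eqs !inE eqxx.
  rewrite !inE (negbTE vv) /= => /eqP pv'.
  have : v' \in [set v; p v] by rewrite eqs !inE eqxx.
  rewrite !inE eq_sym (negbTE vv) /= => /eqP pv.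
  have /andP [_ h1] := pP v vr; have /andP [_ h2] := pP v' v'r.
  by move: h1 h2; rewrite -pv -pv'; move=> h1 h2; have := ltn_trans h1 h2; rewrite ltnn.
have sub : [set [set v; p v] | v in [set~ r]] \subset Edges e.
  apply/subsetP => S /imsetP [v]; rewrite in_setC1 => vr ->.
  apply/EdgesP; exists v, (p v); have /andP [evp _] := pP v vr.
  split=> //; apply/negP => /eqP eq; by move: evp; rewrite -eq irr.
have := subset_leq_card sub; rewrite card_in_imset // cardsC1 => H.
apply: leq_trans (leqSpred #|T|) _; rewrite addn1 ltnS.
apply: leq_trans H _; exact: leqnn.
Qed.


Lemma card_cond_sum (I : finType) (A : {pred I}) (P : pred I) :
  #|[set x in A | P x]| = (\sum_(x in A) (P x : nat))%N.
Proof.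
rewrite -sum1_card big_mkcond [RHS]big_mkcond /=.
apply: eq_bigr => x _; rewrite !inE; by case: (x \in A); case: (P x).
Qed.

Lemma deg_edges (T : finType) (e : rel T) (u : T) :
  symmetric e -> irreflexive e ->
  deg e u = #|[set S in Edges e | u \in S]|.
Proof.
move=> sym irr.
have inj : {in nbhd e u &, injective (fun v => [set u; v])}.
  move=> v v'; rewrite !inE => ev ev' eqs.
  have : v \in [set u; v'] by rewrite -eqs !inE eqxx orbT.
  rewrite !inE => /orP [/eqP vu|/eqP //].
  by move: ev; rewrite vu irr.
rewrite /deg -(card_in_imset inj); apply: eq_card => S.
apply/imsetP/idP.
  move=> [v]; rewrite inE => ev ->; rewrite inE; apply/andP; split; last first.
    by rewrite !inE eqxx.
  apply/EdgesP; exists u, v; split=> //.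
  by apply/negP => /eqP uv; move: ev; rewrite uv irr.
rewrite inE => /andP [/EdgesP [a [b [ab eab ->]]]].
rewrite !inE => /orP [/eqP ->|/eqP ->].
  by exists b; rewrite ?inE.
by exists a; rewrite ?inE ?(sym b a) // setUC.
Qed.

Lemma deg_sum (T : finType) (e : rel T) :
  symmetric e -> irreflexive e ->
  (\sum_u deg e u = 2 * #|Edges e|)%N.
Proof.
move=> sym irr.
rewrite (eq_bigr (fun u => \sum_(S in Edges e) (u \in S : nat))%N); last first.
  by move=> u _; rewrite deg_edges // card_cond_sum.
rewrite exchange_big /= -sum1_card big_distrr /=.
apply: eq_bigr => S /EdgesP [a [b [ab _ ->]]].
rewrite muln1; have := cards2 a b; rewrite ab => <-.
rewrite -sum1_card [RHS]big_mkcond /=; apply: eq_bigr => x _.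
by case: (x \in [set a; b]).
Qed.


Definition Tri (T : finType) (e : rel T) : {set {set T}} :=
  [set D : {set T} | (#|D| == 3) && [forall x in D, forall y in D, (x != y) ==> e x y]].

Lemma TriP (T : finType) (e : rel T) (D : {set T}) :
  reflect (#|D| = 3 /\ forall x y, x \in D -> y \in D -> x != y -> e x y) (D \in Tri e).
Proof.
rewrite inE; apply: (iffP andP) => [[/eqP c /forallP H]|[c H]].
  split=> // x y xD yD xy; have := H x; rewrite xD /= => /forallP /(_ y).
  by rewrite yD xy.
split; first by apply/eqP.
apply/forallP => x; apply/implyP => xD; apply/forallP => y; apply/implyP => yD.
by apply/implyP; apply: H.
Qed.

Lemma card3 (T : finType) (x y z : T) :
  x != y -> x != z -> y != z -> #|[set x; y; z]| = 3.
Proof.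
move=> xy xz yz; rewrite -setUA cardsU1 cards2 yz !inE.
by rewrite (negbTE xy) (negbTE xz).
Qed.

Lemma tri3 (T : finType) (D : {set T}) : #|D| = 3 ->
  exists x y z, [/\ x != y, x != z, y != z & D = [set x; y; z]].
Proof.
move=> c; have : (0 < #|D|)%N by rewrite c.
move=> /card_gt0P [x xD].
have : #|D :\ x| == 2 by rewrite (cardsD1 x D) xD in c; rewrite -eqSS -c.
move=> /cards2P [y [z [yz eq]]].
have : y \in D :\ x by rewrite eq !inE eqxx.
have : z \in D :\ x by rewrite eq !inE eqxx orbT.
rewrite !inE => /andP [zx _] /andP [yx _].
exists x, y, z; split; [by rewrite eq_sym | by rewrite eq_sym | done |].
by rewrite -[LHS](setD1K xD) eq setUA.
Qed.

Lemma nbhd_full (T : finType) (e : rel T) (a : T) (s : seq T) :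
  uniq s -> all (e a) s -> (deg e a <= size s)%N -> forall b, e a b -> b \in s.
Proof.
move=> us alls dl b eab.
have sub : [set x in s] \subset nbhd e a.
  by apply/subsetP => x; rewrite !inE => xs; have := allP alls x xs.
have cs : #|[set x in s]| = size s.
  by rewrite cardsE; apply/card_uniqP.
have /subset_cardP : #|[set x in s]| = #|nbhd e a|.
  by apply/eqP; rewrite eqn_leq subset_leq_card // cs.
move=> /(_ sub) H; have := H b; by rewrite !inE eab => ->.
Qed.

Lemma closed_all (T : finType) (e : rel T) (s : seq T) (x0 : T) :
  connected_graph e -> (forall a b, a \in s -> e a b -> b \in s) -> x0 \in s ->
  (#|T| <= size s)%N.
Proof.
move=> con cl x0s.
have all_in b : b \in s.
  have /connectP [p pp ->] := con x0 b.
  elim: p x0 x0s pp => [|w p IH] x xs //= /andP [exw pw].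
  by apply: IH pw; apply: cl exw.
apply: leq_trans (card_size s); apply: subset_leq_card.
by apply/subsetP => b _; apply: all_in.
Qed.

Lemma m_tri (T : finType) (e : rel T) (x : T) :
  symmetric e -> irreflexive e ->
  m_nbhd e x = #|[set D in Tri e | x \in D]|.
Proof.
move=> sym irr.
have xS S : S \in induced_edges e (nbhd e x) -> x \notin S.
  rewrite inE => /andP [/subsetP sub _]; apply/negP => /sub; by rewrite inE irr.
have inj : {in induced_edges e (nbhd e x) &, injective (fun S => x |: S)}.
  move=> S S' HS HS' eq.
  by rewrite -(setU1K (xS S HS)) -(setU1K (xS S' HS')) eq.
rewrite /m_nbhd -(card_in_imset inj); apply: eq_card => D.
apply/imsetP/idP.
  move=> [S HS ->]; move: (HS) => /xS xnS.
  move: HS; rewrite inE => /andP [/subsetP sub /existsP [v /existsP [w]]].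
  move=> /andP [/andP [vw evw] /eqP SE].
  have xv : e x v by have := sub v; rewrite SE !inE eqxx => /(_ isT).
  have xw : e x w by have := sub w; rewrite SE !inE eqxx orbT => /(_ isT).
  rewrite inE setU11 andbT; apply/TriP; split.
    rewrite SE setUA card3 //; apply/negP => /eqP E.
      by move: xv; rewrite -E irr.
    by move: xw; rewrite -E irr.
  have Hadj a b : a \in [set x; v; w] -> b \in [set x; v; w] -> a != b -> e a b.
    rewrite !inE => /orP [/orP [] /eqP -> | /eqP ->] /orP [/orP [] /eqP -> | /eqP ->];
      rewrite ?eqxx // => _; by rewrite // sym.
  move=> a b; rewrite SE => ha hb; apply: Hadj.
    by move: ha; rewrite !inE orbA.
  by move: hb; rewrite !inE orbA.
rewrite inE => /andP [/TriP [c adj] xD].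
exists (D :\ x); last by rewrite setD1K.
rewrite inE; apply/andP; split.
  apply/subsetP => v; rewrite !inE => /andP [vx vD]; apply: adj => //.
  by rewrite eq_sym.
have : #|D :\ x| == 2 by rewrite (cardsD1 x D) xD in c; rewrite -eqSS -c.
move=> /cards2P [v [w [vw E]]]; apply/existsP; exists v; apply/existsP; exists w.
rewrite vw E eqxx andbT /=.
have : v \in D :\ x by rewrite E !inE eqxx.
have : w \in D :\ x by rewrite E !inE eqxx orbT.
rewrite !inE => /andP [_ wD] /andP [_ vD]; exact: adj.
Qed.


Definition rw (T : finType) (e : rel T) (x : T) : nat := 4 + (deg e x == 2).

Lemma tri_sum_le (T : finType) (e : rel T) (D : {set T}) :
  connected_graph e -> (4 <= #|T|)%N -> D \in Tri e ->
  (\sum_(x in D) rw e x <= 14)%N.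
Proof.
move=> con c4 /TriP [c adj].
rewrite big_split /= sum_nat_const c -card_cond_sum.
set A := [set x in D | deg e x == 2].
have : (#|A| <= 3)%N by rewrite -c; apply: subset_leq_card; apply/subsetP => v; rewrite inE => /andP [].
rewrite leq_eqVlt => /orP [/eqP cA|]; last by lia.
exfalso.
have AD : A \subset D by apply/subsetP => v; rewrite inE => /andP [].
have /subset_cardP : #|A| = #|D| by rewrite cA c.
move=> /(_ AD) eqAD.
have dg v : v \in D -> deg e v = 2 by rewrite -eqAD inE => /andP [_ /eqP].
have [x [y [z [xy xz yz DE]]]] := tri3 c.
have xD : x \in D by rewrite DE !inE eqxx.
have yD : y \in D by rewrite DE !inE eqxx orbT.
have zD : z \in D by rewrite DE !inE eqxx orbT.
have H : (#|T| <= size [:: x; y; z])%N.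
  apply: (closed_all (x0 := x) con) => [a b|]; last by rewrite inE eqxx.
  rewrite !inE => /orP [/eqP ->|/orP [/eqP ->|/eqP ->]] eab.
  - have := @nbhd_full _ e x [:: y; z].
    rewrite /= inE yz adj // adj // (dg x xD) => /(_ isT isT isT b eab).
    move=> H; move: H; rewrite !inE; by case/orP => /eqP ->; rewrite eqxx ?orbT.
  - have := @nbhd_full _ e y [:: x; z].
    rewrite /= inE xz adj // 1?eq_sym // adj // (dg y yD) => /(_ isT isT isT b eab).
    move=> H; move: H; rewrite !inE; by case/orP => /eqP ->; rewrite eqxx ?orbT.
  - have := @nbhd_full _ e z [:: x; y].
    rewrite /= inE xy adj // 1?eq_sym // adj // 1?eq_sym // (dg z zD) => /(_ isT isT isT b eab).
    move=> H; move: H; rewrite !inE; by case/orP => /eqP ->; rewrite eqxx ?orbT.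
by move: H; rewrite /= leqNgt c4.
Qed.

Lemma F4 (T : finType) (e : rel T) :
  symmetric e -> irreflexive e -> connected_graph e -> (4 <= #|T|)%N ->
  (\sum_x m_nbhd e x * rw e x <= 14 * #|Tri e|)%N.
Proof.
move=> sym irr con c4.
rewrite (eq_bigr (fun x => \sum_(D in Tri e) (x \in D : nat) * rw e x))%N; last first.
  by move=> x _; rewrite m_tri // card_cond_sum big_distrl.
rewrite exchange_big /= -sum1_card big_distrr /=.
apply: leq_sum => D DT; rewrite muln1.
apply: leq_trans (tri_sum_le con c4 DT); rewrite [X in (_ <= X)%N]big_mkcond /=.
by apply: leq_sum => x _; case: (x \in D); rewrite ?mul1n ?mul0n.
Qed.


Definition tc (T : finType) (e : rel T) (S : {set T}) := #|[set D in Tri e | S \subset D]|.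

Lemma third_vertex (T : finType) (e : rel T) (D : {set T}) (a b c : T) :
  D \in Tri e -> a \in D -> b \in D -> c \in D -> a != b -> a != c -> b != c ->
  tc e [set a; b] != 1 -> exists w, [/\ w \notin D, e a w & e b w].
Proof.
move=> DT aD bD cD ab ac bc tcn.
have /TriP [cD3 adjD] := DT.
have abcD : [set a; b; c] \subset D.
  by apply/subsetP => v; rewrite !inE => /orP [/orP [] /eqP ->|/eqP ->].
have eqD : [set a; b; c] =i D.
  by apply/subset_cardP => //; rewrite card3 // cD3.
have DD : D \in [set D in Tri e | [set a; b] \subset D].
  rewrite inE DT /=; apply/subsetP => v; rewrite !inE => /orP [] /eqP ->; by [].
have : (1 < tc e [set a; b])%N.
  move: tcn; rewrite /tc; have : (0 < #|[set D in Tri e | [set a; b] \subset D]|)%N.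
    by apply/card_gt0P; exists D.
  lia.
rewrite /tc (cardsD1 D) DD ltnS => /card_gt0P [D' ].
rewrite in_setD1 in_set => /andP [D'D /andP [D'T /subsetP abD']].
have aD' : a \in D' by apply: abD'; rewrite !inE eqxx.
have bD' : b \in D' by apply: abD'; rewrite !inE eqxx orbT.
have /TriP [cD'3 adjD'] := D'T.
have : (0 < #|D' :\: [set a; b]|)%N.
  by rewrite cardsD cD'3 (setIidPr _) ?cards2 ?ab //; apply/subsetP.
move=> /card_gt0P [w]; rewrite !inE negb_or => /andP [/andP [wa wb] wD'].
exists w; split.
- apply/negP => wD.
  have wc : w = c.
    by move: wD; rewrite -eqD !inE (negbTE wa) (negbTE wb) /= => /eqP.
  move: wD'; rewrite wc => cD'.
  have : [set a; b; c] \subset D'.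
    by apply/subsetP => v; rewrite !inE => /orP [/orP [] /eqP ->|/eqP ->].
  move=> /subset_cardP; rewrite card3 // cD'3 => /(_ erefl) eqD'.
  move: D'D => /negP; apply; apply/eqP/setP => v.
  by rewrite -eqD' eqD.
- by apply: adjD' => //; rewrite eq_sym.
- by apply: adjD' => //; rewrite eq_sym.
Qed.

Lemma in4 (T : finType) (v x y z w : T) :
  v \in [:: x; y; z; w] = [|| v == x, v == y, v == z | v == w].
Proof. by rewrite !inE. Qed.

Lemma full3 (T : finType) (e : rel T) (a p q r : T) : subcubic e ->
  p != q -> p != r -> q != r -> e a p -> e a q -> e a r ->
  forall b, e a b -> [|| b == p, b == q | b == r].
Proof.
move=> sc pq pr qr ap aq ar b ab.
have U : uniq [:: p; q; r] by rewrite /= !inE negb_or pq pr qr.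
have A : all (e a) [:: p; q; r] by rewrite /= ap aq ar.
have := nbhd_full U A (sc a) ab.
by rewrite !inE.
Qed.

Lemma del_ex (T : finType) (e : rel T) (D : {set T}) :
  symmetric e -> irreflexive e -> connected_graph e -> subcubic e -> (5 <= #|T|)%N ->
  D \in Tri e -> [exists S in Edges e, (S \subset D) && (tc e S == 1)].
Proof.
move=> sym irr con sc c5 DT.
have /TriP [cD adj] := DT.
have [x [y [z [xy xz yz DE]]]] := tri3 cD.
have xD : x \in D by rewrite DE !inE eqxx.
have yD : y \in D by rewrite DE !inE eqxx orbT.
have zD : z \in D by rewrite DE !inE eqxx orbT.
apply: contraT => /existsPn H.
have tcn a b : a \in D -> b \in D -> a != b -> tc e [set a; b] != 1.
  move=> aD bD ab; have := H [set a; b]; rewrite negb_and => /orP [|].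
    by move=> /negP; case; apply/EdgesP; exists a, b; split=> //; apply: adj.
  rewrite negb_and => /orP [|//] /negP; case.
  by apply/subsetP => v; rewrite !inE => /orP [] /eqP ->.
have [w1 [w1D xw1 yw1]] := third_vertex DT xD yD zD xy xz yz (tcn x y xD yD xy).
have zy : z != y by rewrite eq_sym.
have yx : y != x by rewrite eq_sym.
have zx : z != x by rewrite eq_sym.
have [w2 [w2D xw2 zw2]] := third_vertex DT xD zD yD xz xy zy (tcn x z xD zD xz).
have [w3 [w3D yw3 zw3]] := third_vertex DT yD zD xD yz yx (zx) (tcn y z yD zD yz).
have nD v : v \notin D -> [/\ v != x, v != y & v != z].
  by move=> vD; split; apply/negP => /eqP vE; move: vD; rewrite vE ?xD ?yD ?zD.
have [w1x w1y w1z] := nD w1 w1D.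
have [w2x w2y w2z] := nD w2 w2D.
have [w3x w3y w3z] := nD w3 w3D.
have full := full3 sc.
have w1y' : y != w1 by rewrite eq_sym.
have w1z' : z != w1 by rewrite eq_sym.
have w1x' : x != w1 by rewrite eq_sym.
have w21 : w2 = w1.
  have := full x y z w1 yz w1y' w1z' (adj x y xD yD xy) (adj x z xD zD xz) xw1 w2 xw2.
  by rewrite (negbTE w2y) (negbTE w2z) /= => /eqP.
have w31 : w3 = w1.
  have := full y x z w1 xz w1x' w1z' (adj y x yD xD yx) (adj y z yD zD yz) yw1 w3 yw3.
  by rewrite (negbTE w3x) (negbTE w3z) /= => /eqP.
subst w2 w3; set w := w1.
have H4 : (#|T| <= size [:: x; y; z; w])%N.
  apply: (closed_all (x0 := x) con) => [a b|]; last by rewrite inE eqxx.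
  rewrite in4 => /or4P [] /eqP -> eab; rewrite in4.
  - have := full x y z w yz w1y' w1z' (adj x y xD yD xy) (adj x z xD zD xz) xw1 b eab.
    by case/or3P => ->; rewrite ?orbT.
  - have := full y x z w xz w1x' w1z' (adj y x yD xD yx) (adj y z yD zD yz) yw1 b eab.
    by case/or3P => ->; rewrite ?orbT.
  - have := full z x y w xy w1x' w1y' (adj z x zD xD zx) (adj z y zD yD zy) zw2 b eab.
    by case/or3P => ->; rewrite ?orbT.
  - have := full w x y z xy xz yz; rewrite (sym w x) xw1 (sym w y) yw1 (sym w z) zw2.
    by move=> /(_ isT isT isT b eab) /or3P [] ->; rewrite ?orbT.
by move: H4; rewrite /= leqNgt c5.
Qed.


Definition del (T : finType) (e : rel T) (D : {set T}) : {set T} :=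
  odflt set0 [pick S in Edges e | (S \subset D) && (tc e S == 1)].

Definition Del (T : finType) (e : rel T) : {set {set T}} := [set del e D | D in Tri e].

Definition eprime (T : finType) (e : rel T) : rel T :=
  [rel x y | e x y && ([set x; y] \notin Del e)].

Lemma tc1_uniq (T : finType) (e : rel T) (S D D' : {set T}) :
  tc e S = 1 -> D \in Tri e -> D' \in Tri e -> S \subset D -> S \subset D' -> D = D'.
Proof.
move=> /eqP /cards1P [D0 E] DT D'T SD SD'.
have : D \in [set D in Tri e | S \subset D] by rewrite inE DT SD.
have : D' \in [set D in Tri e | S \subset D] by rewrite inE D'T SD'.
by rewrite E !inE => /eqP -> /eqP ->.
Qed.

Lemma edge_bound (T : finType) (e : rel T) :
  symmetric e -> irreflexive e -> connected_graph e -> subcubic e -> (5 <= #|T|)%N ->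
  (#|T| + #|Tri e| <= #|Edges e| + 1)%N.
Proof.
move=> sym irr con sc c5.
have delP D : D \in Tri e ->
    [/\ del e D \in Edges e, del e D \subset D & tc e (del e D) = 1].
  move=> DT; have := del_ex sym irr con sc c5 DT; rewrite /del.
  case: pickP => [S /andP [SE /andP [SD /eqP t1]] _ //|none].
  by move=> /existsP [S /andP [SE SDt]]; move: (none S); rewrite SE SDt.
have inj : {in Tri e &, injective (del e)}.
  move=> D D' DT D'T eq; have [_ s1 t1] := delP D DT; have [_ s2 _] := delP D' D'T.
  by apply: (tc1_uniq t1 DT D'T s1); rewrite eq.
have cDel : #|Del e| = #|Tri e| by rewrite card_in_imset.
have DelE : Del e \subset Edges e.
  by apply/subsetP => S /imsetP [D DT ->]; have [] := delP D DT.
have con' : connected_graph (eprime e).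
  move=> x y; apply: (connect_sub (e := e)); last exact: con.
  move=> a b eab; case: (boolP ([set a; b] \in Del e)) => [inD|nD]; last first.
    by apply: connect1; rewrite /eprime /= eab nD.
  have [D DT SD] : exists2 D, D \in Tri e & [set a; b] = del e D.
    by move: inD => /imsetP [D DT ->]; exists D.
  have [_ sub t1] := delP D DT.
  have /TriP [cD adj] := DT.
  have ab : a != b by apply/negP => /eqP E; move: eab; rewrite E irr.
  have aD : a \in D by apply: (subsetP sub); rewrite -SD !inE eqxx.
  have bD : b \in D by apply: (subsetP sub); rewrite -SD !inE eqxx orbT.
  have : (0 < #|D :\: [set a; b]|)%N.
    by rewrite cardsD cD (setIidPr _) ?cards2 ?ab //; apply/subsetP => v; rewrite !inE => /orP [] /eqP ->.
  move=> /card_gt0P [c]; rewrite !inE negb_or => /andP [/andP [ca cb] cD'].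
  have notdel u v : u \in D -> v \in D -> u != v -> [set u; v] != [set a; b] ->
      [set u; v] \notin Del e.
    move=> uD vD uv neq; apply/negP => /imsetP [D' D'T E].
    have [_ sub' t1'] := delP D' D'T.
    have Dsame : D' = D.
      apply: (tc1_uniq t1' D'T DT sub'); rewrite -E.
      by apply/subsetP => t; rewrite !inE => /orP [] /eqP ->.
    by move: neq; rewrite E Dsame -SD eqxx.
  have ne1 : [set a; c] != [set a; b].
    apply/negP => /eqP E; have : c \in [set a; b] by rewrite -E !inE eqxx orbT.
    by rewrite !inE (negbTE ca) (negbTE cb).
  have ne2 : [set c; b] != [set a; b].
    apply/negP => /eqP E; have : c \in [set a; b] by rewrite -E !inE eqxx.
    by rewrite !inE (negbTE ca) (negbTE cb).
  have ac : a != c by rewrite eq_sym.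
  have h1 : eprime e a c.
    by rewrite /eprime /= (adj a c aD cD' ac) (notdel a c aD cD' ac ne1).
  have h2 : eprime e c b.
    by rewrite /eprime /= (adj c b cD' bD cb) (notdel c b cD' bD cb ne2).
  exact: connect_trans (connect1 h1) (connect1 h2).
have sub' : Edges (eprime e) \subset Edges e :\: Del e.
  apply/subsetP => S /EdgesP [v [w [vw /andP [evw nD] ->]]].
  rewrite inE nD /=; apply/EdgesP; by exists v, w.
have irr' : irreflexive (eprime e) by move=> x; rewrite /eprime /= irr.
have H := edges_lower irr' con'.
have H2 := subset_leq_card sub'.
rewrite cardsD (setIidPr DelE) cDel in H2.
have H3 : (#|Tri e| <= #|Edges e|)%N by rewrite -cDel; apply: subset_leq_card.
rewrite (leq_subRL _ H3) in H2.
apply: leq_trans (leq_add H (leqnn _)) _.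
rewrite addnAC leq_add2r addnC; exact: H2.
Qed.


Definition cv (T : finType) (e : rel T) (x : T) : nat :=
  if deg e x == 2 then 3 * m_nbhd e x else if deg e x == 3 then m_nbhd e x else 0.

Lemma m_le1 (T : finType) (e : rel T) (x : T) : deg e x = 2 -> (m_nbhd e x <= 1)%N.
Proof.
move=> d2; rewrite /m_nbhd.
rewrite -(cards1 (nbhd e x)); apply: subset_leq_card; apply/subsetP => S.
rewrite inE => /andP [sub /existsP [v /existsP [w /andP [/andP [vw _] /eqP SE]]]].
rewrite inE eqEcard sub /=; move: d2; rewrite /deg => ->.
by rewrite SE cards2 vw.
Qed.

Lemma vertex_ineq (T : finType) (e : rel T) (x : T) : subcubic e ->
  (4 * cv e x + 7 * deg e x <= 21 + m_nbhd e x * rw e x)%N.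
Proof.
move=> sc; rewrite /cv /rw.
have := sc x; have := @m_le1 _ e x.
case: (deg e x) => [|[|[|[|d]]]] //= H _; try lia.
Qed.

Lemma arith (n E Tr K S M : nat) :
  (4 * K + 7 * S <= 21 * n + M)%N -> (M <= 14 * Tr)%N -> S = (2 * E)%N ->
  (n + Tr <= E + 1)%N -> (4 * K <= 7 * n + bound_num n)%N.
Proof.
move=> H1 H2 H3 H4.
have key : (4 * K <= 7 * n + 14)%N by lia.
rewrite /bound_num.
have hr : (n %% 4 < 4)%N by rewrite ltn_pmod.
have hn := divn_eq n 4.
move: hr hn key; case: (n %% 4) => [|[|[|[|r]]]] //= _ hn key; lia.
Qed.


Local Open Scope ring_scope.

Lemma clust_v_cv (T : finType) (e : rel T) (x : T) : subcubic e ->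
  clust_v e x = (cv e x)%:R / 3%:R.
Proof.
move=> sc; rewrite /clust_v /cv; have := sc x.
case: (deg e x) => [|[|[|[|d]]]] //= _; rewrite ?mul0r //.
- by rewrite natrM mulrAC divff ?mul1r ?divr1 // pnatr_eq0.
Qed.

Unset Implicit Arguments.

Theorem theorem2 (T : finType) (e : rel T) :
  simple_graph e -> connected_graph e -> subcubic e -> (6 <= #|T|)%N ->
  clust e <= clust_bound #|T|.
Proof.
move=> [sym irr] con sc c6.
have c5 : (5 <= #|T|)%N by apply: leq_trans c6.
have c4 : (4 <= #|T|)%N by apply: leq_trans c6.
have Hsum : (4 * (\sum_x cv e x) + 7 * (\sum_x deg e x) <=
             21 * #|T| + \sum_x m_nbhd e x * rw e x)%N.
  rewrite !big_distrr /= -big_split /= -sum1_card big_distrr /= -big_split /=.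
  by apply: leq_sum => x _; rewrite muln1; apply: vertex_ineq.
have key := arith Hsum (F4 sym irr con c4) (deg_sum sym irr) (edge_bound sym irr con sc c5).
rewrite /clust (eq_bigr (fun x => (cv e x)%:R / 3%:R)); last by move=> x _; apply: clust_v_cv.
rewrite -mulr_suml -natr_sum /clust_bound.
move: key; set K := (\sum_x cv e x)%N; set n := #|T|; set b := bound_num n => key.
have n0 : n%:R != 0 :> rat by rewrite pnatr_eq0 -lt0n; apply: leq_trans c6.
rewrite -subr_ge0.
have -> : 7%:R / 12%:R + b%:R / (12 * n)%:R - n%:R^-1 * (K%:R / 3%:R) =
          (7 * n + b - 4 * K)%N%:R / (12 * n)%:R :> rat.
  rewrite natrB // natrD !natrM; field; by rewrite n0.
by apply: divr_ge0; apply: ler0n.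
Qed.
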